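(* Let $p\ge1$, $\mathcal X=\{x\in\mathbb R^d:\|x\|_p\le1\}$, $c\in\mathbb R^d$ and $W=\Lambda=\mathrm{diag}(\lambda_1,\dots,\lambda_d)$ with $\lambda_i>0$; let $\Theta=\{\theta:\|\theta-c\|_W\le1\}$. Let $H(y)=-\sum_{i=1}^dy_i^{1/p}|c_i|-\sqrt{\sum_{i=1}^d\lambda_i^{-1}y_i^{2/p}}$ and consider $P_{C,p}$: minimize $H(y)$ over $y\in\Delta_{d-1}$. Given $y\in\Delta_{d-1}$ define $x_i=y_i^{1/p}\,\mathrm{sign}(c_i)$ and $\theta^\star=c+W^{-1}x/\|x\|_{W^{-1}}$. Then for any $\varepsilon>0$, $y$ is an $\varepsilon$-solution to $P_{C,p}$ if and only if $(x,\theta^\star)$ is an $\varepsilon$-solution to $P_B$.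
   Context: $\|z\|_M=\sqrt{z^\top Mz}$, $\|z\|_p=(\sum_i|z_i|^p)^{1/p}$. $\Delta_{d-1}=\{y\in\mathbb R^d:y_i\ge0,\sum_iy_i=1\}$. Convention $\mathrm{sign}(0)=1$. $P_B$: maximize $x^\top\theta$ over $(x,\theta)\in\mathcal X\times\Theta$; an $\varepsilon$-solution to $P_B$ is $(x,\theta)\in\mathcal X\times\Theta$ with $x^\top\theta\ge\sup_{\mathcal X\times\Theta}x'^\top\theta'-\varepsilon$; an $\varepsilon$-solution to $P_{C,p}$ is $y\in\Delta_{d-1}$ with $H(y)\le\min_{\Delta_{d-1}}H+\varepsilon$. *)

(* Defs.v *)
From HB Require Import structures.
From mathcomp Require Import all_boot all_order all_algebra.
From mathcomp Require Import all_classical all_reals all_analysis.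
Set Implicit Arguments. Unset Strict Implicit. Unset Printing Implicit Defensive.
Import Order.TTheory GRing.Theory Num.Theory.
Local Open Scope ring_scope.

Section Defs.
Variables (R : realType) (d : nat).

(* sign with the convention sign(0) = 1 *)
Definition sgn1 (a : R) : R := if 0 <= a then 1 else -1.

Definition lpnorm (p : R) (z : 'I_d -> R) : R :=
  powR (\sum_(i < d) powR `|z i| p) (p^-1).

Definition diagnorm (m : 'I_d -> R) (z : 'I_d -> R) : R :=
  Num.sqrt (\sum_(i < d) m i * z i ^+ 2).

Definition dotp (x y : 'I_d -> R) : R := \sum_(i < d) x i * y i.

Definition simplex (y : 'I_d -> R) : Prop :=
  (forall i, 0 <= y i) /\ \sum_(i < d) y i = 1.

Definition Xset (p : R) (x : 'I_d -> R) : Prop := lpnorm p x <= 1.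

Definition Thetaset (lam c : 'I_d -> R) (th : 'I_d -> R) : Prop :=
  diagnorm lam (fun i => th i - c i) <= 1.

Definition Hfun (p : R) (lam c : 'I_d -> R) (y : 'I_d -> R) : R :=
  - (\sum_(i < d) powR (y i) (p^-1) * `|c i|)
  - Num.sqrt (\sum_(i < d) (lam i)^-1 * powR (y i) (2 / p)).

Definition eps_sol_C (p : R) (lam c : 'I_d -> R) (eps : R) (y : 'I_d -> R) : Prop :=
  simplex y /\ forall y', simplex y' -> Hfun p lam c y <= Hfun p lam c y' + eps.

Definition eps_sol_B (p : R) (lam c : 'I_d -> R) (eps : R)
    (x th : 'I_d -> R) : Prop :=
  Xset p x /\ Thetaset lam c th /\
  forall x' th', Xset p x' -> Thetaset lam c th' ->
    dotp x' th' - eps <= dotp x th.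

Definition x_of (p : R) (c y : 'I_d -> R) : 'I_d -> R :=
  fun i => powR (y i) (p^-1) * sgn1 (c i).

Definition theta_star (lam c x : 'I_d -> R) : 'I_d -> R :=
  fun i => c i + ((lam i)^-1 * x i) / diagnorm (fun j => (lam j)^-1) x.

End Defs.

(* Main.v *)
Require Import Defs.
From HB Require Import structures.
From mathcomp Require Import all_boot all_order all_algebra.
From mathcomp Require Import all_classical all_reals all_analysis.
From mathcomp Require Import ring lra.
Import Order.TTheory GRing.Theory Num.Theory.
Local Open Scope ring_scope.

Section Helpers.
Variables (R : realType) (d : nat).

Lemma cs_bound (lam a u : 'I_d -> R) :
  (forall i, 0 < lam i) ->
  \sum_(i < d) lam i * u i ^+ 2 <= 1 ->
  \sum_(i < d) a i * u i <= Num.sqrt (\sum_(i < d) (lam i)^-1 * a i ^+ 2).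
Proof.
move=> hl hu.
set S := \sum_(i < d) (lam i)^-1 * a i ^+ 2.
have S0 : 0 <= S by apply: sumr_ge0 => i _; rewrite mulr_ge0 ?sqr_ge0 // invr_ge0 ltW.
set A := Num.sqrt S.
have [A0|Apos] := eqVneq A 0.
  have : S <= 0 by rewrite -sqrtr_eq0; apply/eqP.
  move=> Sle; have SE : S = 0 by apply/le_anti; rewrite Sle S0.
  have hz : forall i, (lam i)^-1 * a i ^+ 2 = 0.
    move=> i; move/eqP: SE; rewrite psumr_eq0 => [/allP H|j _].
      by apply/eqP; apply: (H i); rewrite mem_index_enum.
    by rewrite mulr_ge0 ?sqr_ge0 // invr_ge0 ltW.
  rewrite A0 big1 // => i _.
  have := hz i; move/eqP; rewrite mulf_eq0 invr_eq0 gt_eqF //= sqrf_eq0 => /eqP ->.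
  by rewrite mul0r.
have A0' : 0 < A by rewrite lt_def Apos sqrtr_ge0.
have AA : A ^+ 2 = S by rewrite sqr_sqrtr.
apply: (@le_trans _ _ (\sum_(i < d) ((lam i)^-1 * a i ^+ 2 / A + lam i * u i ^+ 2 * A) / 2)).
  apply: ler_sum => i _.
  have li := hl i.
  have key : (lam i)^-1 * A^-1 * (a i - lam i * A * u i) ^+ 2 =
     (lam i)^-1 * a i ^+ 2 / A + lam i * u i ^+ 2 * A - 2 * (a i * u i).
    by field; rewrite Apos gt_eqF.
  have : 0 <= (lam i)^-1 * A^-1 * (a i - lam i * A * u i) ^+ 2.
    by rewrite mulr_ge0 ?sqr_ge0 // mulr_ge0 // invr_ge0 ltW.
  rewrite key => h; lra.
rewrite -mulr_suml big_split /= -mulr_suml -mulr_suml.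
rewrite -/S.
have : (\sum_i lam i * u i ^+ 2) * A <= A by rewrite ler_piMl // ltW.
have -> : S / A = A by rewrite -AA; field; rewrite Apos.
lra.
Qed.

End Helpers.
Section Main.
Variables (R : realType) (d : nat) (p : R) (c lam : 'I_d -> R).
Hypotheses (hp : 1 <= p) (hl : forall i, 0 < lam i).

Let p0 : 0 < p. Proof. exact: lt_le_trans ltr01 hp. Qed.
Let pi0 : 0 < p^-1. Proof. by rewrite invr_gt0. Qed.

Lemma powRK1 a : 0 <= a -> powR (powR a p) p^-1 = a.
Proof. by move=> a0; rewrite -powRrM mulfV ?gt_eqF // powRr1. Qed.

Lemma powRK2 a : 0 <= a -> powR (powR a p^-1) p = a.
Proof. by move=> a0; rewrite -powRrM mulVf ?gt_eqF // powRr1. Qed.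

Lemma pow2p a : 0 <= a -> powR a (2 / p) = (powR a p^-1) ^+ 2.
Proof. by move=> a0; rewrite mulrC powRrM powR_mulrn // powR_ge0. Qed.

Lemma sgn1_sqr (a : R) : sgn1 a ^+ 2 = 1.
Proof. by rewrite /sgn1; case: ifP => _; rewrite ?sqrrN expr1n. Qed.

Lemma sgn1_mul (a : R) : sgn1 a * a = `|a|.
Proof.
rewrite /sgn1; case: ifP => h; first by rewrite mul1r ger0_norm.
by rewrite ltr0_norm ?mulN1r // ltNge h.
Qed.

Lemma norm_sgn1 (a : R) : `|sgn1 a| = 1.
Proof. by rewrite /sgn1; case: ifP => _; rewrite ?normrN normr1. Qed.

Lemma good (y : 'I_d -> R) : simplex y ->
  [/\ Xset p (x_of p c y), Thetaset lam c (theta_star lam c (x_of p c y)) &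
      dotp (x_of p c y) (theta_star lam c (x_of p c y)) = - Hfun p lam c y].
Proof.
move=> [y0 y1].
set x := x_of p c y.
have ax : forall i, `|x i| = powR (y i) p^-1.
  by move=> i; rewrite /x /x_of normrM norm_sgn1 mulr1 ger0_norm // powR_ge0.
have x2 : forall i, x i ^+ 2 = powR (y i) (2 / p).
  by move=> i; rewrite pow2p // /x /x_of exprMn sgn1_sqr mulr1.
set S := \sum_(i < d) (lam i)^-1 * powR (y i) (2 / p).
have S0 : 0 <= S by apply: sumr_ge0 => i _; rewrite mulr_ge0 ?powR_ge0 // invr_ge0 ltW.
have NS : diagnorm (fun j => (lam j)^-1) x = Num.sqrt S.
  by rewrite /diagnorm; congr Num.sqrt; apply: eq_bigr => i _; rewrite x2.
set N := Num.sqrt S.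
have NN : N ^+ 2 = S by rewrite sqr_sqrtr.
split.
- rewrite /Xset /lpnorm.
  rewrite (eq_bigr y); first by rewrite y1 powR1.
  by move=> i _; rewrite ax powRK2.
  rewrite /Thetaset /diagnorm -/N.
  have -> : \sum_(i < d) lam i * (theta_star lam c x i - c i) ^+ 2 = S * N^-1 ^+ 2.
    rewrite /S mulr_suml; apply: eq_bigr => i _.
    rewrite /theta_star NS -/N -x2 (addrC (c i)) addrK.
    move: (N^-1) => M; have li := hl i; field; by rewrite gt_eqF.
  have [->|Nn0] := eqVneq N 0; first by rewrite invr0 expr0n /= mulr0 sqrtr0 ler01.
  by rewrite -NN -exprMn mulfV // expr1n sqrtr1.
- rewrite /dotp /Hfun opprB opprK addrC.
  have -> : \sum_(i < d) x i * theta_star lam c x i =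
     \sum_(i < d) x i * c i + S / N.
    rewrite /S mulr_suml -big_split /=; apply: eq_bigr => i _.
    rewrite /theta_star NS -/N -x2.
    move: (N^-1) => M; have li := hl i; field; by rewrite gt_eqF.
  congr (_ + _).
    apply: eq_bigr => i _; rewrite /x /x_of -mulrA sgn1_mul //.
  rewrite -/S -/N -NN.
  have [->|Nn0] := eqVneq N 0; first by rewrite invr0 !mulr0.
  by rewrite expr2 mulfK.
Qed.

Lemma bound (y x' th' : 'I_d -> R) : simplex y ->
  Xset p x' -> Thetaset lam c th' ->
  exists y2, simplex y2 /\ dotp x' th' <= - Hfun p lam c y2.
Proof.
move=> [y0 y1] hx ht.
set y0' := fun i => powR `|x' i| p.
set s := \sum_(i < d) y0' i.
have s0 : 0 <= s by apply: sumr_ge0 => i _; exact: powR_ge0.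
have s1 : s <= 1.
  rewrite -(powRK2 _ s0).
  have := @ge0_ler_powR _ p (ltW p0) (powR s p^-1) 1.
  rewrite powR1; apply => //; rewrite ?nnegrE ?powR_ge0 ?ler01 //.
exists (fun i => y0' i + (1 - s) * y i); split.
  split.
    by move=> i; rewrite addr_ge0 ?powR_ge0 // mulr_ge0 // subr_ge0.
  by rewrite big_split /= -mulr_sumr y1 mulr1 -/s addrC subrK.
set y2 := fun i => y0' i + (1 - s) * y i.
have y2ge : forall i, `|x' i| <= powR (y2 i) p^-1.
  move=> i; rewrite -{1}(powRK1 _ (normr_ge0 (x' i))).
  apply: (ge0_ler_powR (ltW pi0)); rewrite ?nnegrE ?powR_ge0 //.
    by rewrite /y2 addr_ge0 ?powR_ge0 // mulr_ge0 // subr_ge0.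
  by rewrite /y2 lerDl mulr_ge0 // subr_ge0.
rewrite /dotp /Hfun opprB opprK addrC.
have -> : \sum_(i < d) x' i * th' i =
   \sum_(i < d) x' i * c i + \sum_(i < d) x' i * (th' i - c i).
  by rewrite -big_split /=; apply: eq_bigr => i _; ring.
apply: lerD.
  apply: ler_sum => i _.
  apply: (le_trans (ler_norm _)); rewrite normrM.
  by apply: ler_wpM2r => //.
apply: (le_trans (@cs_bound _ _ lam x' _ hl _)).
  move: ht; rewrite /Thetaset /diagnorm => ht.
  by rewrite -(ler_sqrt _ ler01) sqrtr1.
rewrite ler_sqrt; last first.
  apply: sumr_ge0 => i _; rewrite mulr_ge0 ?powR_ge0 // invr_ge0 ltW //.
apply: ler_sum => i _.
apply: ler_wpM2l; first by rewrite invr_ge0 ltW.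
rewrite pow2p; last by rewrite /y2 addr_ge0 ?powR_ge0 // mulr_ge0 // subr_ge0.
rewrite -real_normK ?num_real //.
by apply: lerXn2r; rewrite ?nnegrE ?powR_ge0.
Qed.

End Main.


Theorem theorem4 (R : realType) (d : nat) (p : R) (c lam : 'I_d -> R)
    (y : 'I_d -> R) (eps : R) :
  1 <= p ->
  (forall i, 0 < lam i) ->
  simplex y ->
  0 < eps ->
  eps_sol_C p lam c eps y <->
  eps_sol_B p lam c eps (x_of p c y) (theta_star lam c (x_of p c y)).
Proof.
move=> hp hl sy _.
have [gX gT gV] := @good _ _ p c lam hp hl y sy.
split.
  move=> [_ hC]; split => //; split => // x' th' hx ht.
  have [y2 [s2 hb]] := @bound _ _ p c lam hp hl _ _ _ sy hx ht.
  have := hC y2 s2; rewrite gV; lra.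
move=> [_ [_ hB]]; split => // y' s'.
have [gX' gT' gV'] := @good _ _ p c lam hp hl y' s'.
have := hB _ _ gX' gT'; rewrite gV gV'; lra.
Qed.
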